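(* Let $R=\bigoplus_{i\ge0}R_i$ be a graded ring, let $n\ge 3$, and let $s,t\in R_0$ satisfy $sR_0+tR_0=R_0$. Let $\alpha\in \mathrm{GL}_n(R)$ be such that (i) $\alpha\equiv \mathrm{Id}$ modulo the ideal $R_+$, (ii) the image $\alpha_s$ of $\alpha$ in $\mathrm{GL}_n(R_s)$ lies in $\mathrm{E}_n(R_s)$, and (iii) $\alpha_t\in \mathrm{E}_n(R_t)$. Then $\alpha\in\mathrm{E}_n(R)$.
   Context: All rings are commutative Noetherian with $1\neq0$ of finite Krull dimension. A graded ring is $R=\bigoplus_{i\ge0}R_i$ with a non-trivial $\mathbb N$-grading; $R_+=\bigoplus_{i\ge1}R_i$. $\mathrm{E}_n(B)$ denotes the subgroup of $\mathrm{GL}_n(B)$ generated by elementary matrices $\mathrm{Id}+aE_{ij}$, $i\ne j$, $a\in B$. *)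

(* Defs.v *)
From HB Require Import structures.
From mathcomp Require Import all_boot all_order all_algebra.
Set Implicit Arguments. Unset Strict Implicit. Unset Printing Implicit Defensive.
Import GRing.Theory.
Local Open Scope ring_scope.

Definition is_ideal (R : comPzRingType) (I : R -> Prop) : Prop :=
  [/\ I 0, (forall x y, I x -> I y -> I (x + y)) & (forall r x, I x -> I (r * x))].

Definition is_prime_ideal (R : comPzRingType) (P : R -> Prop) : Prop :=
  [/\ is_ideal P, ~ P 1 & forall x y, P (x * y) -> P x \/ P y].

Definition noetherian (R : comPzRingType) : Prop :=
  forall I : nat -> R -> Prop, (forall k, is_ideal (I k)) ->
    (forall k x, I k x -> I k.+1 x) ->
    exists N, forall k, (N <= k)%N -> forall x, I k x -> I N x.

Definition finite_krull_dim (R : comPzRingType) : Prop :=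
  exists d : nat, forall P : nat -> R -> Prop,
    (forall k, (k <= d.+1)%N -> is_prime_ideal (P k)) ->
    (forall k, (k <= d)%N ->
       (forall x, P k x -> P k.+1 x) /\ exists x, P k.+1 x /\ ~ P k x) ->
    False.

Record graded_ring (R : comNzRingType) (Rg : nat -> R -> Prop) : Prop := {
  gr_zero : forall i, Rg i 0;
  gr_sub : forall i x y, Rg i x -> Rg i y -> Rg i (x - y);
  gr_mul : forall i j x y, Rg i x -> Rg j y -> Rg (i + j)%N (x * y);
  gr_one : Rg 0%N 1;
  gr_span : forall x, exists (N : nat) (c : nat -> R),
      (forall i, Rg i (c i)) /\ x = \sum_(i < N) c i;
  gr_direct : forall (N : nat) (c : nat -> R), (forall i, Rg i (c i)) ->
      \sum_(i < N) c i = 0 -> forall i, (i < N)%N -> c i = 0;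
  gr_nontrivial : exists (i : nat) (x : R), (0 < i)%N /\ Rg i x /\ x != 0 }.

Definition in_Rplus (R : comNzRingType) (Rg : nat -> R -> Prop) (x : R) : Prop :=
  exists (N : nat) (c : nat -> R), (forall i, Rg i.+1 (c i)) /\ x = \sum_(i < N) c i.

Definition is_localization (R : comNzRingType) (S : comPzRingType)
    (f : {rmorphism R -> S}) (s : R) : Prop :=
  [/\ (exists u : S, f s * u = 1),
      (forall x : R, f x = 0 -> exists k : nat, s ^+ k * x = 0) &
      (forall y : S, exists (x : R) (k : nat), y * f s ^+ k = f x)].

Definition in_GL (B : comPzRingType) (n : nat) (A : 'M[B]_n) : Prop :=
  exists A' : 'M[B]_n, A *m A' = 1%:M /\ A' *m A = 1%:M.

Definition elem_mx (B : comPzRingType) (n : nat) (i j : 'I_n) (a : B) : 'M[B]_n :=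
  1%:M + a *: delta_mx i j.

(* E_n(B): the subgroup of GL_n(B) generated by the elementary matrices.
   Since (Id + a E_ij)^-1 = Id - a E_ij is again elementary, it is the set of
   finite products of elementary matrices. *)
Inductive in_E (B : comPzRingType) (n : nat) : 'M[B]_n -> Prop :=
  | in_E_1 : in_E 1%:M
  | in_E_mul : forall (i j : 'I_n) (a : B) (M : 'M[B]_n),
      i != j -> in_E M -> in_E (elem_mx i j a *m M).

(* Main.v *)
Require Import Defs.
From HB Require Import structures.
From mathcomp Require Import all_boot all_order all_algebra.
From mathcomp Require Import ring zify.
From Stdlib Require Import ClassicalEpsilon.
Set Implicit Arguments. Unset Strict Implicit. Unset Printing Implicit Defensive.
Import GRing.Theory.
Local Open Scope ring_scope.

Section Elem.
Variables (B : comPzRingType) (n : nat).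
Implicit Types (M N : 'M[B]_n) (i j k l p q r : 'I_n) (a b x y : B).

Lemma elemE i j a M k l :
  (elem_mx i j a *m M) k l = M k l + (k == i)%:R * a * M j l.
Proof.
rewrite /elem_mx mulmxDl mul1mx -scalemxAl !mxE; congr (_ + _).
rewrite (bigD1 j) //= big1 ?addr0; last first.
  by move=> t /negbTE tj; rewrite mxE tj andbF mul0r.
by rewrite mxE eqxx andbT mulrA [a * _]mulrC.
Qed.

Lemma elem1E i j a k l :
  (elem_mx i j a) k l = (k == l)%:R + (k == i)%:R * a * (j == l)%:R.
Proof. by rewrite -[elem_mx _ _ _]mulmx1 elemE !mxE. Qed.

Ltac solve_cases :=
  repeat (match goal with
   | |- context [?u == ?v] => let H := fresh "H" in have [H|H] := eqVneq u v; [subst|]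
   end); try (match goal with H : is_true (?x != ?x) |- _ => by rewrite eqxx in H end);
  rewrite ?eqxx /=; try ring.

Lemma elem_add i j a b : i != j ->
  elem_mx i j a *m elem_mx i j b = elem_mx i j (a + b).
Proof.
move=> ij; apply/matrixP=> k l; rewrite elemE !elem1E.
solve_cases.
Qed.

Lemma elem0 i j : elem_mx i j (0:B) = 1%:M.
Proof. by rewrite /elem_mx scale0r addr0. Qed.

Lemma elem_comm p q (a b : 'I_n) x y : q != a -> b != p ->
  elem_mx p q x *m elem_mx a b y = elem_mx a b y *m elem_mx p q x.
Proof.
move=> H1 H2; apply/matrixP=> k l; rewrite !elemE !elem1E; solve_cases.
Qed.

Lemma elem_conj1 p q (b : 'I_n) x y : p != q -> q != b -> b != p ->
  elem_mx p q x *m elem_mx q b y *m elem_mx p q (- x) =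
  elem_mx q b y *m elem_mx p b (x * y).
Proof.
move=> H1 H2 H3; apply/matrixP=> k l; rewrite -!mulmxA !elemE !elem1E; solve_cases.
Qed.

Lemma elem_conj2 p q (a : 'I_n) x y : p != q -> a != p -> a != q ->
  elem_mx p q x *m elem_mx a p y *m elem_mx p q (- x) =
  elem_mx a p y *m elem_mx a q (- (x * y)).
Proof.
move=> H1 H2 H3; apply/matrixP=> k l; rewrite -!mulmxA !elemE !elem1E; solve_cases.
Qed.

Lemma elem_comm3 p q r x y : p != q -> q != r -> r != p ->
  elem_mx q p (x * y) =
  elem_mx q r x *m elem_mx r p y *m elem_mx q r (- x) *m elem_mx r p (- y).
Proof.
move=> H1 H2 H3; apply/matrixP=> k l; rewrite -!mulmxA !elemE !elem1E; solve_cases.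
Qed.
End Elem.

Section InE.
Variables (B : comPzRingType) (n : nat).
Implicit Types (M N : 'M[B]_n) (i j k l : 'I_n) (a : B).

Lemma in_E_elem i j a : i != j -> in_E (elem_mx i j a).
Proof. by move=> ij; rewrite -[elem_mx _ _ _]mulmx1; apply: in_E_mul => //; apply: in_E_1. Qed.

Lemma in_E_mulmx M N : in_E M -> in_E N -> in_E (M *m N).
Proof.
elim=> [|i j a M' ij _ IH] hN; first by rewrite mul1mx.
by rewrite -mulmxA; apply: in_E_mul => //; apply: IH.
Qed.

Lemma in_E_inv M : in_E M -> exists Mi, [/\ in_E Mi, M *m Mi = 1%:M & Mi *m M = 1%:M].
Proof.
elim=> [|i j a M' ij _ [Mi [hMi h1 h2]]].
  by exists 1%:M; split; rewrite ?mulmx1 //; apply: in_E_1.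
exists (Mi *m elem_mx i j (- a)); split.
- by apply: in_E_mulmx => //; apply: in_E_elem.
- by rewrite mulmxA -(mulmxA _ M') h1 mulmx1 elem_add // subrr elem0.
- by rewrite mulmxA -(mulmxA _ _ (elem_mx _ _ _)) elem_add // addNr elem0 mulmx1.
Qed.

Lemma inv_uniq M Mi Mi' : M *m Mi = 1%:M -> Mi' *m M = 1%:M -> Mi = Mi'.
Proof. by move=> h1 h2; rewrite -[Mi]mul1mx -h2 -mulmxA h1 mulmx1. Qed.

End InE.

Section InEMap.
Variables (B B' : comPzRingType) (n : nat) (h : B -> B').
Hypotheses (h0 : h 0 = 0) (h1 : h 1 = 1) (hD : forall x y, h (x + y) = h x + h y)
  (hM : forall x y, h (x * y) = h x * h y).

Lemma map_elem_mul (i j : 'I_n) a (M : 'M[B]_n) :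
  map_mx h (elem_mx i j a *m M) = elem_mx i j (h a) *m map_mx h M.
Proof.
apply/matrixP=> k l; rewrite mxE !elemE !mxE hD !hM.
by case: (k == i); rewrite /= ?h0 ?h1.
Qed.

Lemma map_mx1' : map_mx h (1%:M : 'M[B]_n) = 1%:M.
Proof. by apply/matrixP=> k l; rewrite !mxE; case: (k == l); rewrite /= ?h0 ?h1. Qed.

Lemma in_E_map (M : 'M[B]_n) : in_E M -> in_E (map_mx h M).
Proof.
elim=> [|i j a M' ij _ IH]; first by rewrite map_mx1'; apply: in_E_1.
by rewrite map_elem_mul; apply: in_E_mul.
Qed.

Lemma map_elem (i j : 'I_n) a :
  map_mx h (elem_mx i j a) = elem_mx i j (h a).
Proof. by rewrite -[elem_mx i j a]mulmx1 map_elem_mul map_mx1' mulmx1. Qed.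
End InEMap.

Lemma in_E_rmap (B B' : comPzRingType) (n : nat) (g : {rmorphism B -> B'}) (M : 'M[B]_n) :
  in_E M -> in_E (map_mx g M).
Proof. apply: in_E_map; [exact: rmorph0 | exact: rmorph1 | exact: rmorphD | exact: rmorphM]. Qed.

Lemma unit_cancel (T : comPzRingType) (w v X : T) (N k l : nat) : w * v = 1 ->
  w ^+ N * X * w ^+ l * v ^+ (N + k + l) = X * v ^+ k.
Proof.
move=> wv.
have -> : w ^+ N * X * w ^+ l * v ^+ (N + k + l) = X * v ^+ k * (w * v) ^+ N * (w * v) ^+ l.
  by rewrite !exprMn !exprD; ring.
by rewrite wv !expr1n !mulr1.
Qed.

Section Transfer.
Variables (R : comNzRingType) (S T : comPzRingType) (f : {rmorphism R -> S})
  (g : {rmorphism R -> T}) (s : R) (v : T).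
Hypotheses (hloc : is_localization f s) (hv : g s * v = 1).

Lemma transfer_wd (x x' : R) (k l : nat) (y : S) :
  y * f s ^+ k = f x -> y * f s ^+ l = f x' -> g x * v ^+ k = g x' * v ^+ l.
Proof.
case: hloc => _ hker _ e1 e2.
have : f (x * s ^+ l - x' * s ^+ k) = 0.
  by rewrite rmorphB !rmorphM !rmorphXn -e1 -e2 -!mulrA -!exprD addnC subrr.
case/hker=> N hN.
have := congr1 g hN; rewrite rmorph0 rmorphM rmorphB !rmorphM !rmorphXn => e.
have -> : g x * v ^+ k = (g s ^+ N * (g x * g s ^+ l - g x' * g s ^+ k)) * v ^+ (N + k + l)
    + g x' * v ^+ l.
  rewrite mulrBr mulrBl !mulrA (unit_cancel (g x) N k l hv).
  by rewrite [(N + k + l)%N]addnAC (unit_cancel (g x') N l k hv) subrK.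
by rewrite e mul0r add0r.
Qed.

Let surj y : exists xk : R * nat, y * f s ^+ xk.2 == f xk.1.
Proof. by case: hloc => _ _ /(_ y) [x [k e]]; exists (x, k); apply/eqP. Qed.

Let h (y : S) : T := let xk := xchoose (surj y) in g xk.1 * v ^+ xk.2.

Let hE y x k : y * f s ^+ k = f x -> h y = g x * v ^+ k.
Proof.
move=> e; rewrite /h; have /eqP e' := xchooseP (surj y).
exact: transfer_wd e' e.
Qed.

Lemma transfer_map : exists h : S -> T,
  [/\ h 0 = 0, h 1 = 1, (forall x y, h (x + y) = h x + h y),
     (forall x y, h (x * y) = h x * h y) & forall x, h (f x) = g x].
Proof.
exists h; split.
- by rewrite (@hE 0 0 0) ?rmorph0 ?mul0r.
- by rewrite (@hE 1 1 0) ?rmorph1 ?mulr1.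
- move=> y1 y2; have /eqP e1 := xchooseP (surj y1); have /eqP e2 := xchooseP (surj y2).
  set a := xchoose (surj y1) in e1 *; set b := xchoose (surj y2) in e2 *.
  rewrite (hE e1) (hE e2) (@hE _ (a.1 * s ^+ b.2 + b.1 * s ^+ a.2) (a.2 + b.2)).
    rewrite rmorphD !rmorphM !rmorphXn mulrDl.
    have c1 : g a.1 * g s ^+ b.2 * v ^+ (a.2 + b.2) = g a.1 * v ^+ a.2.
      by rewrite -(unit_cancel (g a.1) 0 a.2 b.2 hv) expr0 mul1r add0n.
    have c2 : g b.1 * g s ^+ a.2 * v ^+ (a.2 + b.2) = g b.1 * v ^+ b.2.
      by rewrite addnC -(unit_cancel (g b.1) 0 b.2 a.2 hv) expr0 mul1r add0n.
    by rewrite c1 c2.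
  rewrite rmorphD !rmorphM !rmorphXn -e1 -e2 exprD; ring.
- move=> y1 y2; have /eqP e1 := xchooseP (surj y1); have /eqP e2 := xchooseP (surj y2).
  set a := xchoose (surj y1) in e1 *; set b := xchoose (surj y2) in e2 *.
  rewrite (hE e1) (hE e2) (@hE _ (a.1 * b.1) (a.2 + b.2)).
    by rewrite rmorphM exprD; ring.
  by rewrite rmorphM -e1 -e2 exprD; ring.
- by move=> x; rewrite (@hE _ x 0) ?mulr1.
Qed.

Lemma transfer n (M : 'M[R]_n) : in_E (map_mx f M) -> in_E (map_mx g M).
Proof.
have [h' [h0 h1 hD hM hf]] := transfer_map.
move=> /(in_E_map h0 h1 hD hM).
have -> : map_mx h' (map_mx f M) = map_mx g M by apply/matrixP=> i j; rewrite !mxE hf.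
done.
Qed.
End Transfer.

Section PolyLoc.
Variables (R S : comNzRingType) (f : {rmorphism R -> S}) (s : R).
Hypothesis hloc : is_localization f s.

Lemma loc_ker_mono (x : R) k k' : (k <= k')%N -> s ^+ k * x = 0 -> s ^+ k' * x = 0.
Proof. by move=> kk e; rewrite -(subnK kk) exprD -mulrA e mulr0. Qed.

Lemma poly_surj (q : {poly S}) : exists (p : {poly R}) (k : nat),
  q * (f s ^+ k)%:P = map_poly f p.
Proof.
case: hloc => _ _ hs.
have ex i : exists xk : R * nat, q`_i * f s ^+ xk.2 == f xk.1.
  by have [x [k e]] := hs q`_i; exists (x, k); apply/eqP.
pose xk i := xchoose (ex i).
pose K := \max_(i < size q) (xk i).2.
exists (\poly_(i < size q) ((xk i).1 * s ^+ (K - (xk i).2))), K.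
apply/polyP=> j; rewrite coefMC (coef_map_id0 _ _ (rmorph0 f)) coef_poly.
case: ltnP => hj.
  2: by rewrite nth_default // mul0r rmorph0.
have hk : ((xk j).2 <= K)%N by rewrite (leq_bigmax (Ordinal hj)).
have /eqP e := xchooseP (ex j).
by rewrite rmorphM rmorphXn -e -mulrA -exprD subnKC.
Qed.

Lemma poly_ker (p : {poly R}) : map_poly f p = 0 -> exists k : nat, (s ^+ k)%:P * p = 0.
Proof.
case: hloc => _ hk _ e0.
have ex i : exists k : nat, s ^+ k * p`_i == 0.
  have e1 : f p`_i = 0 by rewrite -(coef_map_id0 _ _ (rmorph0 f)) e0 coef0.
  have [k e] := hk p`_i e1.
  by exists k; apply/eqP.
pose K := \max_(i < size p) xchoose (ex i).
exists K; apply/polyP=> j; rewrite coefCM coef0.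
case: (ltnP j (size p)) => hj; last by rewrite nth_default // mulr0.
apply: (@loc_ker_mono _ (xchoose (ex j))); first by rewrite (leq_bigmax (Ordinal hj)).
exact/eqP/(xchooseP (ex j)).
Qed.

Lemma poly_loc : is_localization (map_poly f : {rmorphism {poly R} -> {poly S}}) s%:P.
Proof.
case: (hloc) => [[u hu] _ _]; split.
- by exists u%:P; rewrite /= map_polyC -rmorphM /= hu.
- by move=> p /poly_ker [k e]; exists k; rewrite -rmorphXn.
- move=> q; have [p [k e]] := poly_surj q; exists p, k.
  by rewrite /= map_polyC -rmorphXn.
Qed.
End PolyLoc.

Lemma third_index n (hn : (3 <= n)%N) (p q : 'I_n) : exists r : 'I_n, (r != p) && (r != q).
Proof.
have h0 : (0 < n)%N by apply: leq_trans hn.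
have h1 : (1 < n)%N by apply: leq_trans hn.
have h2 : (2 < n)%N by [].
pose r0 := Ordinal h0; pose r1 := Ordinal h1; pose r2 := Ordinal h2.
case E0: ((r0 != p) && (r0 != q)); first by exists r0.
case E1: ((r1 != p) && (r1 != q)); first by exists r1.
exists r2; move: E0 E1; rewrite -!val_eqE /=.
move: (nat_of_ord p) (nat_of_ord q) => a b.
by case: a => [|[|a]] //; case: b => [|[|b]].
Qed.

Section GEdef.
Variables (A : comNzRingType) (s : A) (n : nat).
Inductive GE (N : nat) : 'M[{poly A}]_n -> Prop :=
  | GE1 : GE N 1%:M
  | GEm : forall (i j : 'I_n) (r : {poly A}) M, i != j -> GE N M ->
      GE N (elem_mx i j ((s ^+ N)%:P * r) *m M).

Lemma GE_mul N M1 M2 : GE N M1 -> GE N M2 -> GE N (M1 *m M2).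
Proof.
elim=> [|i j r M0 ij _ IH] h2; first by rewrite mul1mx.
by rewrite -mulmxA; apply: GEm => //; apply: IH.
Qed.

Lemma GE_in_E N M : GE N M -> in_E M.
Proof. by elim=> [|i j r M0 ij _ IH]; [apply: in_E_1 | apply: in_E_mul]. Qed.

Lemma GE_elem N (i j : 'I_n) r : i != j -> GE N (elem_mx i j ((s ^+ N)%:P * r)).
Proof. by move=> ij; rewrite -[elem_mx _ _ _]mulmx1; apply: GEm => //; apply: GE1. Qed.
End GEdef.

Section Dil.
Variables (A S : comNzRingType) (f : {rmorphism A -> S}) (s : A) (n : nat).
Hypotheses (hloc : is_localization f s) (hn : (3 <= n)%N).

Local Notation P := {poly A}.
Local Notation Q := {poly S}.
Local Notation F := (map_poly f : {rmorphism P -> Q}).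

Definition FG N (W : 'M[Q]_n) := exists eps, GE s N eps /\ W = map_mx F eps.

Lemma FG1 N : FG N 1%:M.
Proof. by exists 1%:M; split; [apply: GE1 | rewrite map_mx1]. Qed.

Lemma FG_mul N W1 W2 : FG N W1 -> FG N W2 -> FG N (W1 *m W2).
Proof.
move=> [e1 [h1 ->]] [e2 [h2 ->]]; exists (e1 *m e2); split; first exact: GE_mul.
by rewrite map_mxM.
Qed.

Lemma mapF_elem (i j : 'I_n) (r : P) : map_mx F (elem_mx i j r) = elem_mx i j (F r).
Proof. by apply: map_elem; [exact: rmorph0 | exact: rmorph1 | exact: rmorphD | exact: rmorphM]. Qed.

Lemma FG_elem N (i j : 'I_n) r : i != j -> FG N (elem_mx i j (F ((s ^+ N)%:P * r))).
Proof. by move=> ij; exists (elem_mx i j ((s ^+ N)%:P * r)); split; [apply: GE_elem | rewrite mapF_elem]. Qed.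

Lemma sN_split N m (r : P) : (s ^+ (N + m))%:P * r = (s ^+ N)%:P * ((s ^+ m)%:P * r).
Proof. by rewrite exprD rmorphM mulrA. Qed.

Lemma conj_mul (c ci X Y : 'M[Q]_n) : ci *m c = 1%:M ->
  c *m (X *m Y) *m ci = (c *m X *m ci) *m (c *m Y *m ci).
Proof.
move=> h; rewrite !mulmxA -(mulmxA _ ci c) h mulmx1; done.
Qed.


Definition inS N (w : Q) := exists r : P, w = F ((s ^+ N)%:P * r).

Lemma inS_N N w : inS N w -> inS N (- w).
Proof. by case=> r ->; exists (- r); rewrite mulrN rmorphN. Qed.

Lemma inS_F N k r : inS N (F ((s ^+ (N + k))%:P * r)).
Proof. by exists ((s ^+ k)%:P * r); rewrite sN_split. Qed.

Lemma FG_elem' N (i j : 'I_n) w : i != j -> inS N w -> FG N (elem_mx i j w).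
Proof. by move=> ij [r ->]; apply: FG_elem. Qed.

Lemma conj_elem (p q : 'I_n) (z : S) N : p != q -> exists N', forall (a b : 'I_n) (r : P), a != b ->
  FG N (elem_mx p q z%:P *m map_mx F (elem_mx a b ((s ^+ N')%:P * r)) *m elem_mx p q (- z%:P)).
Proof.
move=> pq.
case: (hloc) => [_ _ hs]; have [x [m e]] := hs z.
have zmul r' : inS N (z%:P * F ((s ^+ (N + m))%:P * r')).
  exists (x%:P * r'); rewrite !rmorphM /= !map_polyC /= !rmorphXn /= -e exprD !polyCM.
  rewrite (rmorphXn polyC) /=; ring.
exists (N + m + (N + m))%N => a b r ab.
have cic : elem_mx p q (- z%:P) *m elem_mx p q z%:P = 1%:M by rewrite elem_add // addNr elem0.
have wS : inS N (F ((s ^+ (N + m + (N + m)))%:P * r)) by rewrite -addnA; apply: inS_F.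
have zwS : inS N (z%:P * F ((s ^+ (N + m + (N + m)))%:P * r)).
  by rewrite sN_split; apply: zmul.
rewrite mapF_elem.
have [eqa|nea] := eqVneq a q; have [eqb|neb] := eqVneq b p.
- subst a b.
  have [r0 /andP [r0p r0q]] := third_index hn p q.
  have -> : (s ^+ (N + m + (N + m)))%:P * r = (s ^+ (N + m))%:P * ((s ^+ (N + m))%:P * r).
    by rewrite exprD polyCM mulrA.
  rewrite rmorphM (elem_comm3 _ _ pq _ r0p); last by rewrite eq_sym.
  rewrite !(conj_mul _ _ cic).
  rewrite elem_conj1 // ?(eq_sym q) //.
  rewrite elem_conj2 // ?(eq_sym r0) //.
  rewrite elem_conj1 // ?(eq_sym q) //.
  rewrite elem_conj2 // ?(eq_sym r0) //.
  have aS : inS N (F (s ^+ (N + m))%:P) by rewrite -[X in F X]mulr1; apply: inS_F.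
  have zaS : inS N (z%:P * F (s ^+ (N + m))%:P) by rewrite -[X in F X]mulr1; apply: zmul.
  have bS : inS N (F ((s ^+ (N + m))%:P * r)) by apply: inS_F.
  have zbS : inS N (z%:P * F ((s ^+ (N + m))%:P * r)) by apply: zmul.
  repeat match goal with |- FG _ (_ *m _) => apply: FG_mul end;
    apply: FG_elem'; rewrite ?mulrN ?opprK; try by [|apply: inS_N|rewrite eq_sym].
- subst a; rewrite elem_conj1 //.
  by apply: FG_mul; apply: FG_elem' => //; rewrite eq_sym.
- subst b; rewrite elem_conj2 //.
  by apply: FG_mul; apply: FG_elem' => //; apply: inS_N.
- rewrite elem_comm; [|by rewrite eq_sym|by []].
  rewrite -mulmxA.
  rewrite elem_add // subrr elem0 mulmx1; exact: FG_elem'.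
Qed.

End Dil.

Section Dil2.
Variables (A S : comNzRingType) (f : {rmorphism A -> S}) (s : A) (n : nat).
Hypotheses (hloc : is_localization f s) (hn : (3 <= n)%N).

Local Notation P := {poly A}.
Local Notation Q := {poly S}.
Local Notation F := (map_poly f : {rmorphism P -> Q}).
Local Notation FG := (@FG A S f s n).

Lemma conj_GE (p q : 'I_n) (z : S) N : p != q -> exists N', forall eps' : 'M[P]_n, GE s N' eps' ->
  FG N (elem_mx p q z%:P *m map_mx F eps' *m elem_mx p q (- z%:P)).
Proof.
move=> pq; have [N' H] := conj_elem hloc hn z N pq; exists N'.
have cic : elem_mx p q (- z%:P) *m elem_mx p q z%:P = 1%:M by rewrite elem_add // addNr elem0.
move=> eps'; elim=> [|i j r M ij _ IH].
  by rewrite map_mx1 mulmx1 elem_add // subrr elem0; apply: FG1.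
rewrite map_mxM (conj_mul _ _ cic); apply: FG_mul => //; exact: H.
Qed.

Lemma Cm_elem (i j : 'I_n) (z : S) : map_mx polyC (elem_mx i j z) = elem_mx i j z%:P.
Proof. by apply: map_elem; [exact: rmorph0 | exact: rmorph1 | exact: rmorphD | exact: rmorphM]. Qed.

Lemma conj_C (d : 'M[S]_n) : in_E d -> exists di, [/\ d *m di = 1%:M, di *m d = 1%:M &
  forall N, exists N', forall eps' : 'M[P]_n, GE s N' eps' ->
    FG N (map_mx polyC d *m map_mx F eps' *m map_mx polyC di)].
Proof.
elim=> [|i j z d' ij _ [di [h1 h2 H]]].
  exists 1%:M; split; rewrite ?mulmx1 // => N; exists N => eps' h.
  by rewrite map_mx1 mul1mx mulmx1; exists eps'.
exists (di *m elem_mx i j (- z)); split.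
- by rewrite mulmxA -(mulmxA _ d') h1 mulmx1 elem_add // subrr elem0.
- by rewrite mulmxA -(mulmxA _ _ (elem_mx _ _ _)) elem_add // addNr elem0 mulmx1.
move=> N; have [N1 H1] := conj_GE z N ij; have [N2 H2] := H N1.
exists N2 => eps' /H2 [eps1 [g1 e1]].
rewrite !map_mxM !Cm_elem polyCN.
have -> : elem_mx i j z%:P *m map_mx polyC d' *m map_mx F eps' *m
   (map_mx polyC di *m elem_mx i j (- z%:P)) =
   elem_mx i j z%:P *m (map_mx polyC d' *m map_mx F eps' *m map_mx polyC di) *m elem_mx i j (- z%:P).
  by rewrite !mulmxA.
by rewrite e1; apply: H1.
Qed.


Inductive CE : 'M[Q]_n -> Prop :=
  | CE1 : CE 1%:M
  | CEc : forall (d di : 'M[S]_n) (i j : 'I_n) (h : Q) V, in_E d -> d *m di = 1%:M ->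
      di *m d = 1%:M -> i != j -> CE V ->
      CE (map_mx polyC d *m elem_mx i j ('X * h) *m map_mx polyC di *m V).

Lemma CE_conj (d di : 'M[S]_n) V : CE V -> in_E d -> d *m di = 1%:M -> di *m d = 1%:M ->
  CE (map_mx polyC d *m V *m map_mx polyC di).
Proof.
move=> hV hd h1 h2; have hh : map_mx polyC di *m map_mx polyC d = 1%:M.
  by rewrite -map_mxM h2 map_mx1.
elim: hV => [|d1 di1 i j h V' hd1 e1 e2 ij _ IH].
  by rewrite mulmx1 -map_mxM h1 map_mx1; apply: CE1.
have -> : map_mx polyC d *m (map_mx polyC d1 *m elem_mx i j ('X * h) *m map_mx polyC di1 *m V')
    *m map_mx polyC di = map_mx polyC (d *m d1) *m elem_mx i j ('X * h) *m
    map_mx polyC (di1 *m di) *m (map_mx polyC d *m V' *m map_mx polyC di).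
  by rewrite !map_mxM !mulmxA -(mulmxA _ (map_mx polyC di) (map_mx polyC d)) hh mulmx1.
apply: CEc => //; first exact: in_E_mulmx.
- by rewrite mulmxA -(mulmxA d) e1 mulmx1.
- by rewrite mulmxA -(mulmxA di1) h2 mulmx1.
Qed.

Lemma gsplit (g : Q) : g = (g`_0)%:P + 'X * drop_poly 1 g.
Proof.
rewrite -{1}(poly_take_drop 1 g) expr1 mulrC; congr (_ + _).
by apply/polyP=> k; rewrite !coefE; case: k.
Qed.

Lemma decomp (W : 'M[Q]_n) : in_E W -> exists d0, in_E d0 /\
  exists V, CE V /\ W = V *m map_mx polyC d0.
Proof.
elim=> [|i j g W' ij _ [d0 [hd0 [V [hV e]]]]].
  by exists 1%:M; split; [apply: in_E_1 | exists 1%:M; split; [apply: CE1 | rewrite map_mx1 mulmx1]].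
exists (elem_mx i j (g`_0) *m d0); split; first by apply: in_E_mul.
have c1 : map_mx polyC (elem_mx i j (- g`_0)) *m map_mx polyC (elem_mx i j g`_0) = 1%:M.
  by rewrite -map_mxM elem_add // addNr elem0 map_mx1.
exists (map_mx polyC (elem_mx i j (g`_0)) *m elem_mx i j ('X * drop_poly 1 g) *m
  map_mx polyC (elem_mx i j (- g`_0)) *m
  (map_mx polyC (elem_mx i j (g`_0)) *m V *m map_mx polyC (elem_mx i j (- g`_0)))); split.
  apply: CEc => //; try apply: in_E_elem => //; try by rewrite elem_add // ?subrr ?addNr elem0.
  apply: CE_conj => //; try apply: in_E_elem => //; by rewrite elem_add // ?subrr ?addNr elem0.
rewrite e map_mxM !mulmxA.
rewrite -!(mulmxA _ (map_mx polyC (elem_mx i j (- g`_0))) (map_mx polyC (elem_mx i j g`_0))).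
rewrite c1 !mulmx1 Cm_elem elem_add ?mulmxA //.
by rewrite -gsplit.
Qed.

Lemma CE_eval0 V : CE V -> map_mx (horner_eval (0 : S)) V = 1%:M.
Proof.
have hC (d : 'M[S]_n) : map_mx (horner_eval 0) (map_mx polyC d) = d.
  by apply/matrixP=> k l; rewrite !mxE horner_evalE hornerC.
elim=> [|d di i j h V' hd e1 e2 ij _ IH]; first by rewrite map_mx1.
rewrite !map_mxM !hC IH mulmx1.
have -> : map_mx (horner_eval 0) (elem_mx i j ('X * h)) = 1%:M.
  rewrite (map_elem (h := horner_eval (0 : S))); [|exact: rmorph0 | exact: rmorph1 | exact: rmorphD | exact: rmorphM].
  by rewrite horner_evalE hornerM hornerX mul0r elem0.
by rewrite mulmx1.
Qed.

End Dil2.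

Section Dil3.
Variables (A S : comNzRingType) (f : {rmorphism A -> S}) (s : A) (n : nat).
Hypotheses (hloc : is_localization f s) (hn : (3 <= n)%N).

Local Notation P := {poly A}.
Local Notation Q := {poly S}.
Local Notation F := (map_poly f : {rmorphism P -> Q}).

Lemma sigma_X (K N' m : nat) (h : Q) (ph : P) : (N' + m <= K)%N ->
  h * (f s ^+ m)%:P = F ph ->
  ('X * h) \Po ((f s ^+ K)%:P * 'X) =
  F ((s ^+ N')%:P * ((s ^+ (K - N' - m))%:P * 'X * (ph \Po ((s ^+ K)%:P * 'X)))).
Proof.
move=> hK e.
have e2 : (h \Po ((f s ^+ K)%:P * 'X)) * (f s ^+ m)%:P = F (ph \Po ((s ^+ K)%:P * 'X)).
  rewrite /= map_comp_poly -e comp_polyM comp_polyC rmorphM /= map_polyC map_polyX /=.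
  by rewrite (rmorphXn f).
rewrite comp_polyM comp_polyX !rmorphM /= -e2 !map_polyC map_polyX /= !(rmorphXn f).
have -> : (f s ^+ K) = f s ^+ N' * f s ^+ (K - N' - m) * f s ^+ m.
  by rewrite -!exprD; congr (_ ^+ _); lia.
rewrite !polyCM; ring.
Qed.

Lemma CE_dil V : CE V -> exists K0, forall K, (K0 <= K)%N -> exists eps : 'M[P]_n,
  in_E eps /\ map_mx (comp_poly ((f s ^+ K)%:P * 'X)) V = map_mx F eps.
Proof.
elim=> [|d di i j h V' hd e1 e2 ij _ [K1 IH]].
  exists 0%N => K _; exists 1%:M; split; first exact: in_E_1.
  by rewrite !map_mx1.
have [di' [f1 f2 HC]] := conj_C hloc hn hd.
have edi : di = di' by apply: inv_uniq e1 f2.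
subst di'.
have [N' HN] := HC 0%N.
have [ph [m em]] := poly_surj hloc h.
exists (K1 + (N' + m))%N => K hK.
have [eps1 [he1 ee1]] := IH K (leq_trans (leq_addr _ _) hK).
set r := (s ^+ (K - N' - m))%:P * 'X * (ph \Po ((s ^+ K)%:P * 'X)).
have [eps2 [g2 ee2]] := HN (elem_mx i j ((s ^+ N')%:P * r)) (GE_elem s N' r ij).
exists (eps2 *m eps1); split.
  by apply: in_E_mulmx => //; apply: GE_in_E g2.
have hCd (c : 'M[S]_n) : map_mx (comp_poly ((f s ^+ K)%:P * 'X)) (map_mx polyC c) = map_mx polyC c.
  by apply/matrixP=> k l; rewrite !mxE /= comp_polyC.
rewrite !(map_mxM (comp_poly ((f s ^+ K)%:P * 'X))).
rewrite !hCd ee1 (map_mxM F) -ee2 mapF_elem.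
rewrite (map_elem (h := comp_poly ((f s ^+ K)%:P * 'X))); [|exact: rmorph0 | exact: rmorph1 | exact: rmorphD | exact: rmorphM].
rewrite (@sigma_X K N' m _ _ _ em) //.
by apply: leq_trans hK; apply: leq_addl.
Qed.
End Dil3.

Lemma torsion_eval (A : comNzRingType) (s : A) (p : {poly A}) (m : nat) (x : A) :
  p`_0 = 0 -> (s ^+ m)%:P * p = 0 -> p.[s ^+ m * x] = 0.
Proof.
move=> p0 e; rewrite horner_coef big1 // => [[[|i] hi]] _ /=; first by rewrite p0 mul0r.
have e1 : s ^+ m * p`_i.+1 = 0 by rewrite -coefCM e coef0.
have -> : p`_i.+1 * (s ^+ m * x) ^+ i.+1 = (s ^+ m * p`_i.+1) * (x * (s ^+ m * x) ^+ i).
  by rewrite exprS; ring.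
by rewrite e1 mul0r.
Qed.

Section Dil4.
Variables (A S : comNzRingType) (f : {rmorphism A -> S}) (s : A) (n : nat).
Hypotheses (hloc : is_localization f s) (hn : (3 <= n)%N).

Local Notation P := {poly A}.
Local Notation Q := {poly S}.
Local Notation F := (map_poly f : {rmorphism P -> Q}).

Theorem dilation (g : 'M[P]_n) : (forall i j, (g i j).[0] = (i == j)%:R) ->
  in_E (map_mx F g) -> exists K, forall b : A, in_E (map_mx (fun p => p.[s ^+ K * b]) g).
Proof.
move=> g0 hE.
have [d0 [hd0 [V [hV eW]]]] := decomp hE.
have hFh0 (p : P) : (F p).[0] = f p.[0] by rewrite /= -(rmorph0 f) horner_map.
have ev : map_mx (horner_eval 0) (map_mx F g) = 1%:M.
  by apply/matrixP=> i j; rewrite !mxE horner_evalE hFh0 g0 rmorph_nat.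
have hC0 (c : 'M[S]_n) : map_mx (horner_eval 0) (map_mx polyC c) = c.
  by apply/matrixP=> k l; rewrite !mxE horner_evalE hornerC.
have ed0 : d0 = 1%:M.
  by have := ev; rewrite eW (map_mxM (horner_eval (0 : S))) (CE_eval0 hV) mul1mx hC0.
rewrite ed0 map_mx1 mulmx1 in eW.
have [K0 HK] := CE_dil hloc hn hV.
have [eps [heps eeps]] := HK K0 (leqnn _).
pose gK := map_mx (comp_poly ((s ^+ K0)%:P * 'X)) g.
have eK : map_mx F gK = map_mx F eps.
  rewrite -eeps -eW; apply/matrixP=> i j; rewrite !mxE /= map_comp_poly.
  by rewrite rmorphM /= map_polyC map_polyX /= (rmorphXn f).
have gK0 : map_mx (horner_eval 0) gK = 1%:M.
  apply/matrixP=> i j; rewrite !mxE horner_evalE horner_comp hornerCM hornerX mulr0.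
  by rewrite g0.
pose e0 := map_mx (horner_eval (0 : A)) eps.
have he0 : in_E e0 by apply: in_E_rmap.
have [e0i [he0i h1 h2]] := in_E_inv he0.
pose eps2 := eps *m map_mx polyC e0i.
have hfF (M : 'M[P]_n) : map_mx f (map_mx (horner_eval 0) M) = map_mx (horner_eval 0) (map_mx F M).
  by apply/matrixP=> i j; rewrite !mxE !horner_evalE hFh0.
have fe0 : map_mx f e0 = 1%:M by rewrite hfF -eK -hfF gK0 map_mx1.
have fe0i : map_mx f e0i = 1%:M.
  by have := congr1 (map_mx f) h1; rewrite map_mxM fe0 mul1mx map_mx1.
have eF : map_mx F eps2 = map_mx F gK.
  rewrite map_mxM eK.
  have -> : map_mx F (map_mx polyC e0i) = map_mx polyC (map_mx f e0i).
    by apply/matrixP=> i j; rewrite !mxE /= map_polyC.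
  by rewrite fe0i map_mx1 mulmx1.
have ev2 : map_mx (horner_eval 0) eps2 = 1%:M.
  have hC0A (c : 'M[A]_n) : map_mx (horner_eval 0) (map_mx polyC c) = c.
    by apply/matrixP=> k l; rewrite !mxE horner_evalE hornerC.
  by rewrite (map_mxM (horner_eval (0:A))) hC0A -/e0 h1.
have hD i j : exists k, (s ^+ k)%:P * (gK i j - eps2 i j) = 0.
  apply: (poly_ker hloc).
  have eij : map_poly f (eps2 i j) = map_poly f (gK i j) by move/matrixP: eF => /(_ i j); rewrite !mxE.
  by rewrite rmorphB /= eij subrr.
have [kf hkf] := @fin_all_exists _ (fun _ => nat) _ (fun ij : 'I_n * 'I_n => hD ij.1 ij.2).
pose m := \max_(ij : 'I_n * 'I_n) kf ij.
have hm i j : (s ^+ m)%:P * (gK i j - eps2 i j) = 0.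
  have km : (kf (i, j) <= m)%N by apply: (leq_bigmax (i, j)).
  by rewrite -(subnK km) exprD polyCM -mulrA hkf mulr0.
exists (K0 + m)%N => b.
have -> : map_mx (fun p => p.[s ^+ (K0 + m) * b]) g = map_mx (horner_eval (s ^+ m * b)) eps2.
  apply/matrixP=> i j; rewrite !mxE horner_evalE; apply/eqP; rewrite -subr_eq0; apply/eqP.
  have := torsion_eval b _ (hm i j).
  rewrite hornerD hornerN => <-.
    by rewrite !mxE horner_comp hornerCM hornerX exprD mulrA.
  rewrite coefB -!horner_coef0.
  move/matrixP: gK0 => /(_ i j); rewrite !mxE horner_evalE => ->.
  by move/matrixP: ev2 => /(_ i j); rewrite !mxE horner_evalE => ->; rewrite subrr.
apply: in_E_rmap; apply: in_E_mulmx => //; exact: in_E_rmap.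
Qed.
End Dil4.

Section Graded.
Variables (R : comNzRingType) (Rg : nat -> R -> Prop) (hgr : graded_ring Rg).

Lemma RgB i x y : Rg i x -> Rg i y -> Rg i (x - y).
Proof. exact: gr_sub. Qed.
Lemma Rg0 i : Rg i 0.
Proof. exact: gr_zero. Qed.
Lemma RgN i x : Rg i x -> Rg i (- x).
Proof. by move=> h; rewrite -sub0r; apply: RgB => //; apply: Rg0. Qed.
Lemma RgD i x y : Rg i x -> Rg i y -> Rg i (x + y).
Proof. by move=> h1 h2; rewrite -[y]opprK; apply: RgB => //; apply: RgN. Qed.
Lemma Rg_sum (I : Type) (r : seq I) (P : pred I) (F : I -> R) i :
  (forall l, P l -> Rg i (F l)) -> Rg i (\sum_(l <- r | P l) F l).
Proof. by move=> h; apply: big_ind => //; [apply: Rg0 | apply: RgD]. Qed.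

Let ex_dec x : exists Nc : nat * (nat -> R), (forall i, Rg i (Nc.2 i)) /\ x = \sum_(i < Nc.1) Nc.2 i.
Proof. by have [N [c [h1 h2]]] := gr_span hgr x; exists (N, c). Qed.

Definition gdec x := proj1_sig (constructive_indefinite_description _ (ex_dec x)).
Lemma gdecP x : (forall i, Rg i ((gdec x).2 i)) /\ x = \sum_(i < (gdec x).1) (gdec x).2 i.
Proof. exact: (proj2_sig (constructive_indefinite_description _ (ex_dec x))). Qed.

Definition comp (k : nat) (x : R) : R := if (k < (gdec x).1)%N then (gdec x).2 k else 0.

Lemma pad (c : nat -> R) N L : (N <= L)%N ->
  \sum_(i < N) c i = \sum_(i < L) (if (i < N)%N then c i else 0).
Proof. by move=> h; rewrite (big_ord_widen L c h) big_mkcond. Qed.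

Lemma comp_uniq x (d : nat -> R) M : (forall i, Rg i (d i)) -> x = \sum_(i < M) d i ->
  forall k, comp k x = if (k < M)%N then d k else 0.
Proof.
move=> hd ex k; have [hc ec] := gdecP x.
set N := (gdec x).1 in ec *; set c := (gdec x).2 in hc ec *.
pose L := maxn N M.
pose e i := (if (i < N)%N then c i else 0) - (if (i < M)%N then d i else 0).
have he i : Rg i (e i).
  by apply: RgB; [case: ifP => _ //; apply: Rg0 | case: ifP => _ //; apply: Rg0].
have se : \sum_(i < L) e i = 0.
  rewrite sumrB -pad ?leq_maxl // -pad ?leq_maxr //.
  by rewrite -ec -ex subrr.
have := gr_direct hgr he se => H.
rewrite /comp -/N -/c.
case: (ltnP k L) => hk.
  by apply/eqP; rewrite -subr_eq0; apply/eqP; apply: H.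
have hN : (N <= k)%N by apply: leq_trans hk; apply: leq_maxl.
have hM : (M <= k)%N by apply: leq_trans hk; apply: leq_maxr.
by rewrite !ltnNge hN hM.
Qed.

Lemma comp_Rg k x : Rg k (comp k x).
Proof. by rewrite /comp; case: ifP => _; [apply: (gdecP x).1 | apply: Rg0]. Qed.

Lemma comp_ge k x : ((gdec x).1 <= k)%N -> comp k x = 0.
Proof. by rewrite /comp ltnNge => ->. Qed.

Lemma comp_sum x L : ((gdec x).1 <= L)%N -> x = \sum_(i < L) comp i x.
Proof. by move=> h; rewrite {1}(gdecP x).2 (pad _ h). Qed.

Lemma comp_add k x y : comp k (x + y) = comp k x + comp k y.
Proof.
pose L := maxn (gdec x).1 (gdec y).1.
have e : x + y = \sum_(i < L) (comp i x + comp i y).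
  by rewrite big_split /= -!comp_sum // ?leq_maxl ?leq_maxr.
rewrite (comp_uniq (d := fun i => comp i x + comp i y) _ e); last by move=> i; apply: RgD; apply: comp_Rg.
case: ltnP => // hk.
rewrite !comp_ge ?addr0 //; apply: leq_trans hk; [apply: leq_maxr | apply: leq_maxl].
Qed.

Lemma comp0 k : comp k 0 = 0.
Proof. by rewrite (comp_uniq (d := fun _ => 0) (M := 0)) ?big_ord0 //; move=> i; apply: Rg0. Qed.

Lemma comp_opp k x : comp k (- x) = - comp k x.
Proof. by apply/eqP; rewrite -subr_eq0 opprK -comp_add addNr comp0. Qed.

Lemma comp_homog k x : Rg 0 x -> comp k x = if k == 0%N then x else 0.
Proof.
move=> h; rewrite (comp_uniq (d := fun i => if i == 0%N then x else 0) (M := 1)).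
- by case: k.
- by case=> [|i] //=; apply: Rg0.
- by rewrite big_ord1.
Qed.

Lemma comp_family (I : finType) (e : I -> R) (deg : I -> nat) :
  (forall l, Rg (deg l) (e l)) -> forall k,
  comp k (\sum_l e l) = \sum_(l | deg l == k) e l.
Proof.
move=> he k.
pose m := \max_l deg l.
have hdeg l : (deg l < m.+1)%N by rewrite ltnS (leq_bigmax l).
pose g j := \sum_(l | deg l == j) e l.
have hg j : Rg j (g j) by apply: Rg_sum => l /eqP <-.
have es : \sum_l e l = \sum_(j < m.+1) g j.
  rewrite (partition_big (fun l => (inord (deg l) : 'I_m.+1)) xpredT) //=.
  apply: eq_bigr => j _; apply: eq_bigl => l.
  by rewrite -val_eqE /= inordK.
rewrite (comp_uniq hg es); case: ltnP => // hk.
rewrite /g big_pred0 // => l; apply/negbTE; rewrite neq_ltn.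
by rewrite (leq_trans (hdeg l) hk).
Qed.

Definition Theta (x : R) : {poly R} := \poly_(i < (gdec x).1) comp i x.

Lemma coef_Theta x k : (Theta x)`_k = comp k x.
Proof. by rewrite coef_poly; case: ltnP => // h; rewrite comp_ge. Qed.

Lemma ThetaE x L : ((gdec x).1 <= L)%N -> Theta x = \sum_(i < L) comp i x *: 'X^i.
Proof.
move=> h; apply/polyP=> k; rewrite coef_Theta coef_sumMXn.
case: (ltnP k L) => hk.
  by rewrite (big_pred1 (Ordinal hk)) // => i /=; rewrite -val_eqE.
rewrite big_pred0; first by rewrite comp_ge // (leq_trans h hk).
by move=> i /=; apply/negbTE; rewrite neq_ltn (leq_trans (ltn_ord i) hk).
Qed.

Lemma Theta_zmod : zmod_morphism Theta.
Proof. by move=> x y; apply/polyP=> k; rewrite coefB !coef_Theta comp_add comp_opp. Qed.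

Lemma Theta1 : Theta 1 = 1.
Proof.
apply/polyP=> k; rewrite coef_Theta coefC comp_homog //; last exact: gr_one hgr.
Qed.

Lemma ThetaM x y : Theta (x * y) = Theta x * Theta y.
Proof.
pose L := maxn (gdec x).1 (gdec y).1.
have hx : ((gdec x).1 <= L)%N by apply: leq_maxl.
have hy : ((gdec y).1 <= L)%N by apply: leq_maxr.
rewrite (ThetaE hx) (ThetaE hy) big_distrlr /= pair_bigA /=.
have exy : x * y = \sum_(p : 'I_L * 'I_L) comp p.1 x * comp p.2 y.
  rewrite {1}(comp_sum hx) {1}(comp_sum hy) big_distrlr /= pair_bigA /=.
  by apply: eq_bigr.
apply/polyP=> k; rewrite coef_Theta exy (comp_family (deg := fun p : 'I_L * 'I_L => (p.1 + p.2)%N)).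
  rewrite (eq_bigr (fun p : 'I_L * 'I_L => (comp p.1 x * comp p.2 y) *: 'X^(p.1 + p.2))).
    by rewrite coef_sumMXn.
  by move=> [i j] _ /=; rewrite -scalerAl -scalerAr scalerA -exprD.
move=> [i j] /=; apply: (gr_mul hgr); [exact: (comp_Rg i x) | exact: (comp_Rg j y)].
Qed.

Lemma Theta_monoid : monoid_morphism Theta.
Proof. by split; [exact: Theta1 | exact: ThetaM]. Qed.

HB.instance Definition _ := GRing.isZmodMorphism.Build R {poly R} Theta Theta_zmod.
HB.instance Definition _ := GRing.isMonoidMorphism.Build R {poly R} Theta Theta_monoid.

Lemma Theta_homog x : Rg 0 x -> Theta x = x%:P.
Proof. by move=> h; apply/polyP=> k; rewrite coef_Theta coefC comp_homog. Qed.

Lemma Theta_at1 x : (Theta x).[1] = x.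
Proof.
rewrite (ThetaE (leqnn _)) [RHS](comp_sum (leqnn ((gdec x).1))) horner_sum.
by apply: eq_bigr => i _; rewrite hornerZ hornerXn expr1n mulr1.
Qed.

Lemma Theta_at0 x : (Theta x).[0] = comp 0 x.
Proof. by rewrite horner_coef0 coef_Theta. Qed.

Lemma comp0_Rplus x : in_Rplus Rg x -> comp 0 x = 0.
Proof.
case=> N [c [hc ->]].
pose d i := if i is i'.+1 then c i' else 0.
have hd i : Rg i (d i) by case: i => [|i] /=; [apply: Rg0 | apply: hc].
have e : \sum_(i < N) c i = \sum_(i < N.+1) d i by rewrite big_ord_recl /= add0r.
by rewrite (comp_uniq hd e).
Qed.
End Graded.

Section Side.
Variables (R : comNzRingType) (Rg : nat -> R -> Prop) (hgr : graded_ring Rg)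
  (n : nat) (hn : (3 <= n)%N) (s : R) (hs : Rg 0%N s)
  (S : comPzRingType) (f : {rmorphism R -> S}) (HS : (1 : S) != 0)
  (hloc : is_localization f s) (alpha : 'M[R]_n) (hE : in_E (map_mx f alpha)).

Definition SS : Type := S.
HB.instance Definition _ := GRing.ComPzRing.on SS.
HB.instance Definition _ := GRing.PzSemiRing_isNonZero.Build SS HS.
Definition ff : R -> SS := f.
HB.instance Definition _ := GRing.RMorphism.on ff.

Lemma hloc' : is_localization ff s.
Proof. exact: hloc. Qed.

Local Notation Th := (Theta hgr).

Lemma side1 : (forall i j, comp hgr 0 (alpha i j) = (i == j)%:R) ->
  exists K, forall b, in_E (map_mx (fun x => (Th x).[s ^+ K * b]) alpha).
Proof.
move=> h0.
have [u hu] : exists u, f s * u = 1 by case: hloc => [[u hu] _ _]; exists u.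
have := @dilation R SS ff s n hloc' hn (map_mx Th alpha).
case.
- by move=> i j; rewrite mxE Theta_at0.
- have -> : map_mx (map_poly ff) (map_mx Th alpha) = map_mx (map_poly ff \o Th) alpha.
    by apply/matrixP=> i j; rewrite !mxE.
  have := @transfer R S _ f (map_poly ff \o Th : {rmorphism R -> {poly SS}}) s ((u : SS)%:P : {poly SS}) hloc.
  apply.
    by rewrite /= Theta_homog // map_polyC -polyCM /= /ff hu.
  done.
move=> K HK; exists K => b; have := HK b.
by have -> // : map_mx (fun p => p.[s ^+ K * b]) (map_mx Th alpha) =
   map_mx (fun x => (Th x).[s ^+ K * b]) alpha by apply/matrixP=> i j; rewrite !mxE.
Qed.

Lemma side2 (alpha' : 'M[R]_n) : alpha *m alpha' = 1%:M -> alpha' *m alpha = 1%:M ->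
  exists K, forall b d : R, d + s ^+ K * b = 1 ->
  in_E (alpha *m map_mx (fun x => (Th x).[d]) alpha').
Proof.
move=> hi1 hi2.
have [u hu] : exists u, f s * u = 1 by case: hloc => [[u hu] _ _]; exists u.
pose TXY := (comp_poly ('X%:P + 'X) \o map_poly polyC \o Th : {rmorphism R -> {poly {poly R}}}).
pose beta := map_mx TXY alpha *m map_mx polyC (map_mx Th alpha').
have hlocA := poly_loc hloc'.
pose G2 := (map_poly ff \o Th : {rmorphism R -> {poly SS}}).
have hG2 : in_E (map_mx G2 alpha).
  have := @transfer R S _ f G2 s ((u : SS)%:P : {poly SS}) hloc.
  apply => //.
  by rewrite /= Theta_homog // map_polyC -polyCM /= /ff hu.
have hG2' : in_E (map_mx G2 alpha').
  have [Mi [hMi m1 m2]] := in_E_inv hG2.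
  have m3 : map_mx G2 alpha' *m map_mx G2 alpha = 1%:M by rewrite -map_mxM hi2 map_mx1.
  by have <- // := inv_uniq m1 m3.
have := @dilation {poly R} {poly SS} (map_poly ff) s%:P n hlocA hn beta.
case.
- move=> i j.
  have : map_mx (horner_eval 0) beta = 1%:M.
    rewrite /beta map_mxM.
    have -> : map_mx (horner_eval 0) (map_mx TXY alpha) = map_mx Th alpha.
      apply/matrixP=> i' j'; rewrite !mxE horner_evalE /TXY /= horner_comp.
      by rewrite hornerD hornerC hornerX addr0; apply: comp_polyXr.
    have -> : map_mx (horner_eval 0) (map_mx polyC (map_mx Th alpha')) = map_mx Th alpha'.
      by apply/matrixP=> i' j'; rewrite !mxE horner_evalE hornerC.
    by rewrite -map_mxM hi1 map_mx1.
  by move/matrixP=> /(_ i j); rewrite !mxE horner_evalE.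
- rewrite /beta map_mxM; apply: in_E_mulmx.
    have -> : map_mx (map_poly (map_poly ff)) (map_mx TXY alpha) =
        map_mx (map_poly (map_poly ff) \o TXY) alpha by apply/matrixP=> i j; rewrite !mxE.
    have := @transfer R S _ f (map_poly (map_poly ff) \o TXY : {rmorphism R -> {poly {poly SS}}})
      s (((u : SS)%:P)%:P : {poly {poly SS}}) hloc.
    apply => //.
    rewrite /= /TXY /= Theta_homog // map_polyC /= comp_polyC !map_polyC /=.
    by rewrite -!polyCM map_polyC -polyCM /ff hu.
  have -> : map_mx (map_poly (map_poly ff)) (map_mx polyC (map_mx Th alpha')) =
      map_mx polyC (map_mx G2 alpha').
    by apply/matrixP=> i j; rewrite !mxE /= map_polyC.
  exact: in_E_rmap.
move=> K HK; exists K => b d hd.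
have := in_E_rmap (horner_eval d) (HK b%:P).
have -> : map_mx (fun p => p.[s%:P ^+ K * b%:P]) beta =
   map_mx (horner_eval (s%:P ^+ K * b%:P)) beta.
  by apply/matrixP=> i j; rewrite !mxE.
rewrite /beta !map_mxM => h.
match type of h with in_E (?A1 *m ?A2) =>
  have e1 : A1 = alpha; [|have e2 : A2 = map_mx (fun x => (Th x).[d]) alpha'; [|by rewrite -e1 -e2]] end.
  apply/matrixP=> i j; rewrite !mxE /= !horner_evalE.
  rewrite horner_comp hornerD hornerX hornerC.
  have hc (p q : {poly R}) : (p^:P).[q] = p \Po q by [].
  rewrite hc horner_comp hornerD hornerX hornerM hornerC -rmorphXn hornerC.
  by rewrite hd Theta_at1.
by apply/matrixP=> i j; rewrite !mxE /= !horner_evalE hornerC.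
Qed.
End Side.

Lemma comax_pow (R : comPzRingType) (x y u v : R) k : x * u + y * v = 1 ->
  exists u' v', x ^+ k * u' + y * v' = 1.
Proof.
move=> h; elim: k => [|k [u' [v' IH]]]; first by exists 1, 0; rewrite expr0 mulr1 mulr0 addr0.
exists (u' * u), (x ^+ k * u' * v + v').
have -> : x ^+ k.+1 * (u' * u) + y * (x ^+ k * u' * v + v') =
   x ^+ k * u' * (x * u + y * v) + y * v' by rewrite exprS; ring.
by rewrite h mulr1.
Qed.

Lemma nil_unit (R : comPzRingType) (s t a b : R) k : s * a + t * b = 1 -> s ^+ k = 0 ->
  exists w, t * w = 1.
Proof.
move=> h hk; exists (b * \sum_(i < k) (s * a) ^+ i).
have e : t * b = 1 - s * a by rewrite -h addrAC subrr add0r.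
have e2 := subrX1 (s * a) k.
rewrite exprMn hk mul0r sub0r in e2.
rewrite mulrA e -opprB mulNr -e2 opprK //.
Qed.

Lemma loc_nil (R : comNzRingType) (S : comPzRingType) (f : {rmorphism R -> S}) (s : R) :
  is_localization f s -> (1 : S) = 0 -> exists k, s ^+ k = 0.
Proof.
case=> _ hk _ e; have e' : f 1 = 0 by rewrite rmorph1 e.
have [k hk'] := hk 1 e'.
by exists k; rewrite mulr1 in hk'.
Qed.

Unset Implicit Arguments.
Theorem mainTheorem2 (R : comNzRingType) (Rg : nat -> R -> Prop)
  (hnoeth : noetherian R) (hdim : finite_krull_dim R)
  (hgr : graded_ring Rg) (n : nat) (hn : (3 <= n)%N) (s t : R)
  (hs : Rg 0%N s) (ht : Rg 0%N t)
  (hst : exists a b : R, [/\ Rg 0%N a, Rg 0%N b & s * a + t * b = 1])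
  (alpha : 'M[R]_n) (hGL : in_GL alpha)
  (h1 : forall i j, in_Rplus Rg ((alpha - 1%:M) i j))
  (h2 : exists (S : comPzRingType) (f : {rmorphism R -> S}),
          is_localization f s /\ in_E (map_mx f alpha))
  (h3 : exists (S : comPzRingType) (f : {rmorphism R -> S}),
          is_localization f t /\ in_E (map_mx f alpha)) :
  in_E alpha.
Proof.
have [a [b [_ _ hab]]] := hst.
have [S1 [f1 [hl1 hE1]]] := h2; have [S2 [f2 [hl2 hE2]]] := h3.
have [alpha' [hi1 hi2]] := hGL.
have h0 : forall i j, comp hgr 0 (alpha i j) = (i == j)%:R.
  move=> i j; have := comp0_Rplus hgr (h1 i j).
  have hij : comp hgr 0 ((i == j)%:R) = (i == j)%:R.
    rewrite comp_homog //.
    by case: (i == j) => /=; [exact: (gr_one hgr) | exact: (gr_zero hgr)].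
  rewrite !mxE comp_add comp_opp hij.
  by move/eqP; rewrite subr_eq0 => /eqP.
have unit_case (u : R) (S : comPzRingType) (f : {rmorphism R -> S}) :
    Rg 0%N u -> is_localization f u -> in_E (map_mx f alpha) -> (exists w, u * w = 1) ->
    in_E alpha.
  move=> hu hl hE [w hw].
  have HS : (1 : S) != 0.
    apply/eqP => e; have [l hl'] := loc_nil hl e.
    have := congr1 (fun x => x ^+ l) hw; rewrite expr1n exprMn hl' mul0r => /eqP.
    by rewrite eq_sym oner_eq0.
  have [K HK] := side1 hn hu HS hl hE h0.
  have := HK (w ^+ K); rewrite -exprMn hw expr1n.
  by have -> : map_mx (fun x => (Theta hgr x).[1]) alpha = alpha by apply/matrixP=> i j; rewrite mxE Theta_at1.
case: (eqVneq (1 : S1) 0) => [e1|HS1].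
  have [k hk] := loc_nil hl1 e1.
  exact: (unit_case t S2 f2 ht hl2 hE2 (nil_unit hab hk)).
case: (eqVneq (1 : S2) 0) => [e2|HS2].
  have [k hk] := loc_nil hl2 e2.
  have hba : t * b + s * a = 1 by rewrite addrC.
  exact: (unit_case s S1 f1 hs hl1 hE1 (nil_unit hba hk)).
have [K1 HK1] := side2 hgr hn hs HS1 hl1 hE1 hi1 hi2.
have [K2 HK2] := side1 hn ht HS2 hl2 hE2 h0.
have [u1 [v1 e1]] := comax_pow K1 hab.
have e1' : t * v1 + s ^+ K1 * u1 = 1 by rewrite addrC.
have [u2 [v2 e2]] := comax_pow K2 e1'.
pose d := t ^+ K2 * u2.
have hd : d + s ^+ K1 * v2 = 1 by rewrite /d.
have := in_E_mulmx (HK1 v2 d hd) (HK2 u2).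
pose phi := (horner_eval d \o Theta hgr : {rmorphism R -> R}).
have -> : map_mx (fun x => (Theta hgr x).[d]) alpha' = map_mx phi alpha'.
  by apply/matrixP=> i j; rewrite !mxE.
have -> : map_mx (fun x => (Theta hgr x).[t ^+ K2 * u2]) alpha = map_mx phi alpha.
  by apply/matrixP=> i j; rewrite !mxE.
by rewrite -mulmxA -map_mxM hi2 map_mx1 mulmx1.
Qed.
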